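(* If $F=\{f_i\}_{i=1}^N$ is an equal norm tight frame for $\mathcal H$ and $G$ is a dual of $F$ such that $(F,G)\in\mathcal F^{(1)}$, then $G=S_F^{-1}F$.
   Context: $\mathcal H$ is a complex Hilbert space of finite dimension $n$, inner product linear in the first argument. A finite sequence $F=\{f_i\}_{i=1}^N$ is a frame if there are $0<A\le B$ with $A\|f\|^2\le\sum_{i}|\langle f,f_i\rangle|^2\le B\|f\|^2$ for all $f$; tight if one can take $A=B$; equal norm if $\|f_i\|$ is constant. $S_Ff=\sum_i\langle f,f_i\rangle f_i$ is the frame operator and $S_F^{-1}F=\{S_F^{-1}f_i\}_{i=1}^N$ the canonical dual. $G=\{g_i\}_{i=1}^N$ is a dual of $F$ if $f=\sum_i\langle f,g_i\rangle f_i$ for all $f$; $(F,G)$ is then an $(N,n)$ dual pair. The error operator for $\Lambda\subseteq\{1,\dots,N\}$ is $E_{\Lambda,F,G}f=\sum_{i\in\Lambda}\langle f,f_i\rangle g_i$. With $\|T\|_{\mathcal F}=\sqrt{\operatorname{tr}(T^*T)}$, $\epsilon^{(1)}_{F,G}=\max_{1\le i\le N}\|E_{\{i\},F,G}\|_{\mathcal F}$, $\epsilon^{(1)}=\inf\{\epsilon^{(1)}_{F,G}:(F,G)\text{ an }(N,n)\text{ dual pair}\}$, $\mathcal F^{(1)}=\{(F,G):\epsilon^{(1)}_{F,G}=\epsilon^{(1)}\}$. *)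

(* Defs.v *)
(* R : realType, complex numbers C = R[i] (mathcomp-real-closed),
   H = C^n represented by column vectors 'cV[R[i]]_n. *)
From mathcomp Require Import all_boot all_order all_algebra.
From mathcomp Require Import complex.
From mathcomp Require Import classical_sets reals.
Set Implicit Arguments. Unset Strict Implicit. Unset Printing Implicit Defensive.
Import Order.TTheory GRing.Theory Num.Theory.
Local Open Scope ring_scope.

Section Frames.
Variable R : realType.
Local Notation C := (R[i]).

Definition adjm m k (T : 'M[C]_(m, k)) : 'M[C]_(k, m) :=
  map_mx (fun z : C => (z^*)%C) T^T.

(* inner product, linear in the first argument *)
Definition ip n (f g : 'cV[C]_n) : C := \sum_(k < n) f k 0 * ((g k 0)^*)%C.

Definition abs2 (z : C) : R := @complex.Re R (z * (z^*)%C).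

Definition vnorm n (f : 'cV[C]_n) : R := Num.sqrt (@complex.Re R (ip f f)).

Definition is_frame n N (F : 'I_N -> 'cV[C]_n) : Prop :=
  exists A B : R, 0 < A /\ A <= B /\
    forall f : 'cV[C]_n,
      A * vnorm f ^+ 2 <= \sum_(i < N) abs2 (ip f (F i)) <= B * vnorm f ^+ 2.

Definition is_tight_frame n N (F : 'I_N -> 'cV[C]_n) : Prop :=
  exists A : R, 0 < A /\
    forall f : 'cV[C]_n,
      A * vnorm f ^+ 2 <= \sum_(i < N) abs2 (ip f (F i)) <= A * vnorm f ^+ 2.

Definition is_equal_norm n N (F : 'I_N -> 'cV[C]_n) : Prop :=
  forall i j, vnorm (F i) = vnorm (F j).

(* frame operator S_F, as the matrix with  S_F *m f = \sum_i <f,f_i> f_i *)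
Definition frame_op n N (F : 'I_N -> 'cV[C]_n) : 'M[C]_n :=
  \sum_(i < N) (F i *m adjm (F i)).

Definition canonical_dual n N (F : 'I_N -> 'cV[C]_n) : 'I_N -> 'cV[C]_n :=
  fun i => invmx (frame_op F) *m F i.

Definition is_dual n N (F G : 'I_N -> 'cV[C]_n) : Prop :=
  forall f : 'cV[C]_n, f = \sum_(i < N) ip f (G i) *: F i.

Definition dual_pair n N (F G : 'I_N -> 'cV[C]_n) : Prop :=
  is_frame F /\ is_dual F G.

(* error operator E_{L,F,G}, as the matrix with E *m f = \sum_{i in L} <f,f_i> g_i *)
Definition err_op n N (F G : 'I_N -> 'cV[C]_n) (L : {set 'I_N}) : 'M[C]_n :=
  \sum_(i in L) (G i *m adjm (F i)).

Definition frob n (T : 'M[C]_n) : R := Num.sqrt (@complex.Re R (\tr (adjm T *m T))).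

(* epsilon^(1)_{F,G} = max_i ||E_{{i},F,G}||_F  (all terms are >= 0) *)
Definition eps1 n N (F G : 'I_N -> 'cV[C]_n) : R :=
  \big[Num.max/0]_(i < N) frob (err_op F G [set i]).

Definition eps1_opt (n N : nat) : R :=
  inf [set e : R | exists F G : 'I_N -> 'cV[C]_n, dual_pair F G /\ e = eps1 F G].

Definition in_F1 n N (F G : 'I_N -> 'cV[C]_n) : Prop :=
  dual_pair F G /\ eps1 F G = eps1_opt n N.

End Frames.

(* Main.v *)
Require Import Defs.
From mathcomp Require Import all_boot all_order all_algebra.
From mathcomp Require Import complex.
From mathcomp Require Import classical_sets reals.
From mathcomp Require Import ring.
Import Order.TTheory GRing.Theory Num.Theory.
Local Open Scope ring_scope.
Section Aux.
Context {R : realType}.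
Local Notation C := (R[i]).
Lemma conjcM (x y : C) : conjc (x * y) = conjc x * conjc y.
Proof. by rewrite rmorphM. Qed.
Lemma conjcD (x y : C) : conjc (x + y) = conjc x + conjc y.
Proof. by rewrite raddfD. Qed.
Lemma conjcN (x : C) : conjc (- x) = - conjc x.
Proof. by rewrite raddfN. Qed.
Lemma conjc_sum I (r : seq I) (P : pred I) (f : I -> C) :
  ((\sum_(i <- r | P i) f i)^*)%C = \sum_(i <- r | P i) ((f i)^*)%C.
Proof. elim/big_rec2: _ => [|i x y _ <-]; [exact: conjc0 | exact: conjcD]. Qed.
Lemma adjmM m k p (A : 'M[C]_(m,k)) (B : 'M[C]_(k,p)) : adjm (A *m B) = adjm B *m adjm A.
Proof. by rewrite /adjm trmx_mul map_mxM. Qed.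
Lemma adjmE m k (A : 'M[C]_(m,k)) i j : adjm A i j = ((A j i)^*)%C.
Proof. by rewrite !mxE. Qed.
Lemma adjmD m k (A B : 'M[C]_(m,k)) : adjm (A + B) = adjm A + adjm B.
Proof. by apply/matrixP=> i j; rewrite !mxE /= raddfD. Qed.
Lemma adjmZ m k (c : C) (A : 'M[C]_(m,k)) : adjm (c *: A) = (c^*)%C *: adjm A.
Proof. apply/matrixP=> i j; rewrite !mxE /=. exact: conjcM. Qed.
Lemma adjmK m k (A : 'M[C]_(m,k)) : adjm (adjm A) = A.
Proof. by apply/matrixP=> i j; rewrite !mxE conjcK. Qed.
Lemma ip_mx n (f g : 'cV[C]_n) : ip f g = (adjm g *m f) 0 0.
Proof. rewrite /ip !mxE; apply: eq_bigr => k _; by rewrite !mxE mulrC. Qed.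
Lemma ip_conj n (f g : 'cV[C]_n) : ip g f = ((ip f g)^*)%C.
Proof. rewrite /ip conjc_sum; apply: eq_bigr => k _; by rewrite conjcM conjcK mulrC. Qed.
Lemma ipDl n (u v w : 'cV[C]_n) : ip (u + v) w = ip u w + ip v w.
Proof. rewrite /ip -big_split; apply: eq_bigr => k _; by rewrite mxE mulrDl. Qed.
Lemma ipBl n (u v w : 'cV[C]_n) : ip (u - v) w = ip u w - ip v w.
Proof. rewrite /ip -sumrB; apply: eq_bigr => k _; by rewrite !mxE mulrBl. Qed.
Lemma ipZl n k (u w : 'cV[C]_n) : ip (k *: u) w = k * ip u w.
Proof. rewrite /ip mulr_sumr; apply: eq_bigr => l _; by rewrite mxE mulrA. Qed.
Lemma ipBr n (u v w : 'cV[C]_n) : ip w (u - v) = ip w u - ip w v.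
Proof. by rewrite ip_conj ipBl conjcD conjcN -!ip_conj. Qed.
Lemma ipZr n k (u w : 'cV[C]_n) : ip u (k *: w) = (k^*)%C * ip u w.
Proof. by rewrite ip_conj ipZl conjcM -ip_conj. Qed.
Lemma ip_ge0 n (f : 'cV[C]_n) : 0 <= ip f f.
Proof. by apply: sumr_ge0 => k _; apply: mulcJ_ge0. Qed.
Lemma ip_eq0 n (f : 'cV[C]_n) : ip f f = 0 -> f = 0.
Proof.
move=> H0; have H := psumr_eq0P (fun k _ => mulcJ_ge0 (f k 0)) H0.
apply/matrixP => k j; rewrite (ord1 j) mxE.
by have /eqP := H k isT; rewrite mulf_eq0 conjc_eq0 orbb => /eqP.
Qed.
Lemma ge0_real (x : C) : 0 <= x -> x = (complex.Re x)%:C%C.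
Proof. by case: x => a b /ger0_Im /= ->. Qed.
Lemma ReD (x y : C) : complex.Re (x + y) = complex.Re x + complex.Re y.
Proof. by case: x; case: y. Qed.
Lemma Re_sum I (r : seq I) (P : pred I) (f : I -> C) :
  complex.Re (\sum_(i <- r | P i) f i) = \sum_(i <- r | P i) complex.Re (f i).
Proof. exact: (big_morph _ ReD). Qed.
Lemma le_Re (x y : C) : 0 <= x -> 0 <= y -> complex.Re x <= complex.Re y -> x <= y.
Proof. by move=> /ge0_real -> /ge0_real -> H; rewrite lecR. Qed.
Lemma Re_ge0 (x : C) : 0 <= x -> 0 <= complex.Re x.
Proof. by rewrite lecE => /andP[_]. Qed.
Lemma vnorm_sq n (f : 'cV[C]_n) : vnorm f ^+ 2 = complex.Re (ip f f).
Proof. by rewrite /vnorm sqr_sqrtr // Re_ge0 // ip_ge0. Qed.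
Lemma outer_mul n (u v f : 'cV[C]_n) : (u *m adjm v) *m f = ip f v *: u.
Proof. by rewrite -mulmxA (mx11_scalar (adjm v *m f)) -ip_mx mul_mx_scalar. Qed.
Lemma tr_outer n (u v : 'cV[C]_n) : \tr (u *m adjm v) = ip u v.
Proof. by rewrite mxtrace_mulC trace_mx11 -ip_mx. Qed.
Lemma frob_outer n (g f : 'cV[C]_n) :
  frob (g *m adjm f) = Num.sqrt (complex.Re (ip g g * ip f f)).
Proof.
rewrite /frob adjmM adjmK mulmxA -(mulmxA f) (mx11_scalar (adjm g *m g)) -ip_mx.
by rewrite mul_mx_scalar -scalemxAl mxtraceZ tr_outer.
Qed.
Lemma mx_ext n m (A B : 'M[C]_(m, n)) : (forall x : 'cV[C]_n, A *m x = B *m x) -> A = B.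
Proof.
move=> H; apply/matrixP => i j.
have := congr1 (fun v : 'cV[C]_m => v i 0) (H (delta_mx j 0)).
by rewrite -!colE !mxE.
Qed.
Lemma conjc_i : conjc ('i%C : C) = - 'i%C.
Proof. by apply/eqP; rewrite eq_complex /= oppr0 !eqxx. Qed.
Lemma adjm_delta n (i : 'I_n) : adjm (delta_mx i (0 : 'I_1)) = delta_mx 0 i :> 'M[C]_(1, n).
Proof.
apply/matrixP => a b; rewrite !mxE /=.
by rewrite andbC; case: ((a == 0) && (b == i)); [exact: conjc1 | exact: conjc0].
Qed.
Lemma polar n (T : 'M[C]_n) :
  (forall x : 'cV[C]_n, (adjm x *m (T *m x)) 0 0 = 0) -> T = 0.
Proof.
move=> H.
pose Q (x y : 'cV[C]_n) := (adjm y *m (T *m x)) 0 0.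
have H' x : Q x x = 0 by exact: H.
have QDl x y z : Q (x + y) z = Q x z + Q y z by rewrite /Q !mulmxDr mxE.
have QDr x y z : Q z (x + y) = Q z x + Q z y by rewrite /Q adjmD mulmxDl mxE.
have QZl k x y : Q (k *: x) y = k * Q x y by rewrite /Q -!scalemxAr mxE.
have QZr k x y : Q x (k *: y) = conjc k * Q x y by rewrite /Q adjmZ -scalemxAl mxE.
have Q0 x y : Q x y = 0.
  have e1 : Q x y + Q y x = 0.
    by move: (H' (x + y)); rewrite QDl !QDr !H' add0r addr0.
  have e2 : (- 'i%C) * Q x y + 'i%C * Q y x = 0.
    by move: (H' (x + 'i%C *: y)); rewrite QDl !QDr !H' (QZr 'i%C x y) (QZl 'i%C y x) conjc_i add0r addr0.
  have : (2%:R * 'i%C) * Q x y = 0.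
    have -> : (2%:R * 'i%C) * Q x y = 'i%C * (Q x y + Q y x) - ((- 'i%C) * Q x y + 'i%C * Q y x) by ring.
    by rewrite e1 e2 mulr0 subr0.
  move/eqP; rewrite !mulf_eq0 => /orP[/orP[]|/eqP //].
  - by rewrite pnatr_eq0.
  - by rewrite eq_complex /= eqxx andTb oner_eq0.
apply/matrixP => i j; rewrite mxE.
have := Q0 (delta_mx j 0) (delta_mx i 0).
by rewrite /Q adjm_delta -rowE -colE !mxE.
Qed.
End Aux.

Theorem corollary3p5 (R : realType) (n N : nat) (F G : 'I_N -> 'cV[R[i]]_n) :
  is_frame F -> is_tight_frame F -> is_equal_norm F ->
  is_dual F G -> in_F1 F G ->
  G = canonical_dual F.
Proof.
move=> Hfr [A [A0 HA]] Heq Hdual [[_ _] Hopt].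
case: n F G Hfr HA Heq Hdual Hopt => [|n] F G Hfr HA Heq Hdual Hopt.
  by apply: boolp.funext => i; apply/matrixP => -[].
pose a : R[i] := (A%:C)%C.
have Sq f : (adjm f *m (frame_op F *m f)) 0 0 =
    \sum_(i < N) ip f (F i) * conjc (ip f (F i)).
  rewrite /frame_op mulmx_suml mulmx_sumr summxE; apply: eq_bigr => i _.
  by rewrite outer_mul -scalemxAr mxE -ip_mx [ip (F i) f]ip_conj.
have Hq f : (adjm f *m (frame_op F *m f)) 0 0 = a * ip f f.
  have /andP[h1 h2] := HA f.
  have E : \sum_i abs2 (ip f (F i)) = A * vnorm f ^+ 2.
    by apply/le_anti/andP; split.
  have P0 : 0 <= \sum_(i < N) ip f (F i) * conjc (ip f (F i)).
    by apply: sumr_ge0 => i _; exact: mulcJ_ge0.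
  rewrite Sq (ge0_real _ P0).
  rewrite Re_sum.
  rewrite (_ : \sum_(i < N) complex.Re (ip f (F i) * conjc (ip f (F i))) =
            \sum_i abs2 (ip f (F i))) //.
  rewrite E vnorm_sq {2}(ge0_real _ (ip_ge0 _ f)).
  by rewrite /a -rmorphM.
have HS : frame_op F = a%:M.
  apply/eqP; rewrite -subr_eq0; apply/eqP/polar => f.
  rewrite mulmxBl mulmxBr mxE Hq mul_scalar_mx -scalemxAr.
  by rewrite !mxE [ip f f]ip_mx mxE subrr.
have a0 : 0 < a by rewrite /a ltcR.
case: N F G Hfr HA Heq Hdual Hopt Sq Hq HS => [|N] F G Hfr HA Heq Hdual Hopt Sq Hq HS.
  have := congr1 (fun M : 'M[R[i]]_n.+1 => M 0 0) HS.
  rewrite /frame_op big_ord0 !mxE /= mulr1n => Ha.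
  by move: a0; rewrite -Ha ltxx.
pose c := ip (F ord0) (F ord0).
have Hc i : ip (F i) (F i) = c.
  have := congr1 (fun x => x ^+ 2) (Heq i ord0); rewrite /= !vnorm_sq => E.
  by rewrite (ge0_real _ (ip_ge0 _ (F i))) E -ge0_real // ip_ge0.
have HcN : c *+ N.+1 = a *+ n.+1.
  have := congr1 mxtrace HS; rewrite mxtrace_scalar /frame_op raddf_sum => <-.
  rewrite (eq_bigr (fun=> c)) ?sumr_const ?card_ord //.
  by move=> i _; rewrite -(Hc i); exact: tr_outer.
pose b := a^-1.
have a_neq0 : a != 0 by rewrite gt_eqF.
have Hba : b * a = 1 by rewrite mulVf.
have Hbc : conjc b = b by rewrite /b /a conjc_inv conjc_real.
have Hcd i : canonical_dual F i = b *: F i.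
  by rewrite /canonical_dual HS invmx_scalar mul_scalar_mx.
pose G' := canonical_dual F.
have HdG' : dual_pair F G'.
  split => // f.
  rewrite /G'; under eq_bigr => i _ do rewrite Hcd ipZr Hbc -scalerA.
  rewrite -scaler_sumr.
  have -> : \sum_i ip f (F i) *: F i = frame_op F *m f.
    by rewrite /frame_op mulmx_suml; apply: eq_bigr => i _; rewrite outer_mul.
  by rewrite HS mul_scalar_mx scalerA Hba scale1r.
have Herr (G0 : 'I_N.+1 -> 'cV[R[i]]_n.+1) i :
    frob (err_op F G0 [set i]) = Num.sqrt (complex.Re (ip (G0 i) (G0 i) * c)).
  by rewrite /err_op big_set1 frob_outer Hc.
pose B := Num.sqrt (complex.Re (b * (b * c) * c)).
have HG'B : eps1 F G' <= B.
  apply: bigmax_le; first exact: sqrtr_ge0.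
  by move=> i _; rewrite Herr /G' Hcd ipZl ipZr Hbc Hc.
have Hle : eps1 F G <= eps1 F G'.
  rewrite Hopt; apply: ge_inf.
  - by exists 0 => e [F0 [G0 [_ ->]]]; exact: bigmax_ge_id.
  - by exists F, G'.
have c0 : 0 < c.
  rewrite lt_def ip_ge0 andbT; apply/eqP => c0; move: HcN.
  rewrite c0 mul0rn => /eqP; rewrite eq_sym mulrn_eq0 /= => /eqP ha.
  by move: a_neq0; rewrite ha eqxx.
have b0 : 0 <= b by rewrite invr_ge0 ltW.
have HG i : ip (G i) (G i) <= b * (b * c).
  have h := le_trans (le_bigmax _ _ i) (le_trans Hle HG'B).
  have nn : 0 <= b * (b * c) * c by rewrite !mulr_ge0 // ltW.
  rewrite Herr /B ler_sqrt in h; last exact: Re_ge0.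
  have h' := le_Re _ _ (mulr_ge0 (ip_ge0 _ _) (ltW c0)) nn h.
  by rewrite ler_pM2r in h'.
have HM : \sum_i F i *m adjm (G i) = 1%:M.
  apply: mx_ext => f; rewrite mul1mx mulmx_suml; apply: esym.
  rewrite {1}(Hdual f); apply: eq_bigr => i _; by rewrite outer_mul.
have Hfg : \sum_i ip (F i) (G i) = n.+1%:R.
  have := congr1 mxtrace HM; rewrite mxtrace1 raddf_sum => <-.
  by apply: eq_bigr => i _; symmetry; exact: tr_outer.
have Hgf : \sum_i ip (G i) (F i) = n.+1%:R.
  under eq_bigr => i _ do rewrite ip_conj.
  by rewrite -conjc_sum Hfg conjc_nat.
have E : b * b * (a *+ n.+1) = b * n.+1%:R.
  by rewrite [LHS]mulrnAr -mulrA Hba mulr1 mulr_natr.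
pose D i := G i - b *: F i.
have HD i : ip (D i) (D i) = ip (G i) (G i) - b * ip (G i) (F i)
    - b * ip (F i) (G i) + b * b * ip (F i) (F i).
  rewrite /D !ipBl !ipBr !ipZl !ipZr Hbc; ring.
have Hsum : \sum_i ip (D i) (D i) = \sum_i ip (G i) (G i) - b * n.+1%:R.
  under eq_bigr => i _ do rewrite HD.
  rewrite big_split /= !sumrB -!mulr_sumr Hgf Hfg.
  under [X in _ + _ * X]eq_bigr => i _ do rewrite Hc.
  by rewrite sumr_const card_ord HcN E addrNK.
have Hsum0 : \sum_i ip (D i) (D i) = 0.
  apply/le_anti/andP; split; last by apply: sumr_ge0 => i _; exact: ip_ge0.
  rewrite Hsum subr_le0.
  apply: le_trans (ler_sum _ (fun i _ => HG i)) _.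
  by rewrite sumr_const card_ord -mulrnAr -mulrnAr HcN mulrA E.
apply: boolp.funext => i; rewrite Hcd.
apply/eqP; rewrite -subr_eq0; apply/eqP; apply: ip_eq0.
move: Hsum0 => /psumr_eq0P H; apply: H => // j _; exact: ip_ge0.
Qed.
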